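(* Let $F$ be a field with $\operatorname{char}(F)\neq 2$ and let $U$ be a noncommutative unital prime associative $F$-algebra. Consider the algebra $A=U\times U$ as a superalgebra with respect to the grading induced by the exchange automorphism $(u,v)\mapsto(v,u)$, i.e. $A_0=\{(u,u):u\in U\}$ and $A_1=\{(u,-u):u\in U\}$. Then every Lie superautomorphism $\varphi$ of $A$ is either a superautomorphism or the negative of a superantiautomorphism.
   Context: A superalgebra is an algebra $A=A_0\oplus A_1$ with $A_iA_j\subseteq A_{i+j}$ ($i,j\in\mathbb Z_2$); homogeneous elements of $A_i$ have degree $|x|=i$; graded linear maps preserve degrees. The supercommutator is $[x,y]_s=xy-(-1)^{|x||y|}yx$ for homogeneous $x,y$, extended bilinearly. A Lie superautomorphism of $A$ is a bijective graded linear map $\varphi:A\to A$ with $\varphi([x,y]_s)=[\varphi(x),\varphi(y)]_s$. A superautomorphism is a bijective graded algebra homomorphism; a superantiautomorphism is a bijective graded linear map $\psi$ with $\psi(xy)=(-1)^{|x||y|}\psi(y)\psi(x)$ for homogeneous $x,y$. *)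

(* Defs.v *)
From mathcomp Require Import all_boot all_algebra.
Set Implicit Arguments. Unset Strict Implicit. Unset Printing Implicit Defensive.
Import GRing.Theory.
Local Open Scope ring_scope.

Section Super.
Variables (F : fieldType) (U : algType F).

Definition superA := (U * U)%type.

(* Grading induced by the exchange automorphism (u,v) |-> (v,u):
   A_0 = {(u,u)}, A_1 = {(u,-u)}.  [homog i x] : x is homogeneous of degree i
   (false = 0, true = 1). *)
Definition homog (i : bool) (x : superA) : Prop :=
  if i then x.2 = - x.1 else x.2 = x.1.

Definition ssign (i j : bool) : F := if i && j then -1 else 1.

Definition scomm (i j : bool) (x y : superA) : superA :=
  x * y - ssign i j *: (y * x).

Definition graded_linear (f : superA -> superA) : Prop :=
  (forall (a : F) (x y : superA), f (a *: x + y) = a *: f x + f y) /\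
  (forall (i : bool) (x : superA), homog i x -> homog i (f x)).

Definition lie_superautomorphism (f : superA -> superA) : Prop :=
  [/\ bijective f, graded_linear f &
      forall (i j : bool) (x y : superA), homog i x -> homog j y ->
        f (scomm i j x y) = scomm i j (f x) (f y)].

Definition superautomorphism (f : superA -> superA) : Prop :=
  [/\ bijective f, graded_linear f & forall x y : superA, f (x * y) = f x * f y].

Definition superantiautomorphism (f : superA -> superA) : Prop :=
  [/\ bijective f, graded_linear f &
      forall (i j : bool) (x y : superA), homog i x -> homog j y ->
        f (x * y) = ssign i j *: (f y * f x)].

End Super.

Definition prime_ring (R : pzRingType) : Prop :=
  forall a b : R, (forall x : R, a * x * b = 0) -> a = 0 \/ b = 0.

Definition noncommutative (R : pzRingType) : Prop :=
  exists x y : R, x * y != y * x.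

(* Main.v *)
Require Import Defs.
From mathcomp Require Import all_boot all_algebra.
Import GRing.Theory.
Set Implicit Arguments. Unset Strict Implicit.
Local Open Scope ring_scope.

Lemma g4 (V : zmodType) (a b c d e f : V): a+b+c+d-a-e-f-d = b - f - e + c.
Proof.
rewrite [_ + d - a]addrAC [_ + d - e]addrAC [_ + d - f]addrAC addrK.
rewrite -!addrA addrC !addrA.
rewrite [_ - f + a]addrAC [_ - e + a]addrAC subrK.
by rewrite [in LHS]addrAC [in RHS]addrAC [b - f + c]addrAC.
Qed.

Lemma jid (R : pzRingType) (x y z : R) :
  (x*y + y*x)*z + z*(x*y+y*x) - (x*(y*z+z*y) + (y*z+z*y)*x) = y*(x*z - z*x) - (x*z - z*x)*y.
Proof.
by rewrite !mulrDl !mulrDr ?mulrBl ?mulrBr ?mulrN ?mulNr !mulrA !opprD ?opprB ?opprK !addrA g4.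
Qed.

Lemma central_cancel (R : pzRingType) (hp : prime_ring R) (d w : R) :
  (forall x, d * x = x * d) -> d != 0 -> d * w = 0 -> w = 0.
Proof.
move=> dC dn0 dw.
have key : forall x, d * x * w = 0 by move=> x; rewrite dC -mulrA dw mulr0.
by case: (hp d w key) => // d0; rewrite d0 eqxx in dn0.
Qed.

Lemma comm_lemma (R : pzRingType) (hp : prime_ring R) (hnc : noncommutative R) (del : R) :
  (forall x, del * x = x * del) ->
  (forall x y z : R, del * (y*(x*z - z*x) - (x*z - z*x)*y) = 0) -> del = 0.
Proof.
move=> dC H; have [//|dn0] := eqVneq del 0; exfalso.
have H' : forall x z y : R, (x*z - z*x) * y = y * (x*z - z*x).
  move=> x z y; apply/eqP; rewrite eq_sym -subr_eq0; apply/eqP.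
  exact: (central_cancel hp dC dn0 (H x y z)).
case: hnc => x0 [y0 hxy].
set k := x0 * y0 - y0 * x0.
have kn0 : k != 0 by rewrite /k subr_eq0.
have kC : forall y : R, k * y = y * k by move=> y; rewrite H'.
have xkC : forall w : R, (x0 * k) * w = w * (x0 * k).
  have -> : x0 * k = x0 * (x0 * y0) - (x0 * y0) * x0.
    by rewrite /k mulrBr !mulrA.
  by move=> w; rewrite H'.
have : x0 * y0 - y0 * x0 = 0.
  apply: (central_cancel hp kC kn0).
  rewrite mulrBr !mulrA (kC x0) (kC y0) xkC -(mulrA y0 k x0) (kC x0) !mulrA subrr.
  by [].
by move=> h; move: kn0; rewrite /k h eqxx.
Qed.

Lemma two_cancel (F : fieldType) (U : lmodType F) (hchar : (2%:R : F) != 0) (x : U) :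
  x + x = 0 -> x = 0.
Proof.
move=> h; have : (2%:R : F) *: x = 0 by rewrite scaler_nat mulr2n.
move=> h2; rewrite -[x]scale1r -(mulVf hchar) -scalerA h2 scaler0 //.
Qed.

Lemma half_eq (F : fieldType) (U : lmodType F) (hchar : (2%:R : F) != 0) (x y : U) :
  x + x = y + y -> x = y.
Proof.
move=> h; apply/eqP; rewrite -subr_eq0; apply/eqP; apply: (two_cancel hchar).
by rewrite addrA [x - y + x]addrAC h addrK subrr.
Qed.

Lemma core (F : fieldType) (U : algType F) (hchar : (2%:R : F) != 0)
  (hprime : prime_ring U) (hnc : noncommutative U) (f g : U -> U)
  (fD : forall x y, f (x + y) = f x + f y) (gD : forall x y, g (x + y) = g x + g y)
  (fsurj : forall y, exists x, f x = y)
  (L1 : forall a b, f (a*b - b*a) = f a * f b - f b * f a)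
  (L2 : forall a b, g (a*b - b*a) = f a * g b - g b * f a)
  (L3 : forall a b, f (a*b + b*a) = g a * g b + g b * g a) :
  (forall a b, [/\ f (a*b) = f a * f b, g (a*b) = f a * g b, g (a*b) = g a * f b
                 & f (a*b) = g a * g b]) \/
  (forall a b, [/\ f (a*b) = - (f b * f a), g (a*b) = - (g b * f a),
                   g (a*b) = - (f b * g a) & f (a*b) = g b * g a]).
Proof.
have f0 : f 0 = 0 by apply: (@addrI _ (f 0)); rewrite -fD !addr0.
have g0 : g 0 = 0 by apply: (@addrI _ (g 0)); rewrite -gD !addr0.
have fN : forall x, f (- x) = - f x.
  by move=> x; apply: (@addrI _ (f x)); rewrite -fD !subrr f0.
have fB : forall x y, f (x - y) = f x - f y by move=> x y; rewrite fD fN.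
set c := g 1.
have cC : forall y, c * y = y * c.
  move=> y; have [a <-] := fsurj y.
  have := L2 a 1; rewrite mulr1 mul1r subrr g0 => /eqP; rewrite eq_sym subr_eq0.
  by move/eqP.
have fcg : forall a, f a = c * g a.
  move=> a; have := L3 a 1; rewrite mulr1 mul1r fD cC => h.
  exact: (half_eq hchar).
have [u fu] := fsurj 1.
set d := g u.
have cd : c * d = 1 by rewrite -fcg.
have dc : d * c = 1 by rewrite -cC.
have dC : forall y, d * y = y * d.
  by move=> y; rewrite -[d * y]mulr1 -cd mulrA -(mulrA d y c) -cC mulrA dc mul1r.
have gdf : forall a, g a = d * f a by move=> a; rewrite fcg mulrA dc mul1r.
set e := d * d.
have eC : forall y, e * y = y * e by move=> y; rewrite /e -mulrA (dC y) mulrA (dC y) -mulrA.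
have dd : forall x y, (d * x) * (d * y) = e * (x * y).
  by move=> x y; rewrite -mulrA (mulrA x) -dC !mulrA.
have Jf : forall a b, f (a*b + b*a) = e * (f a * f b + f b * f a).
  by move=> a b; rewrite L3 !gdf !dd mulrDr.
have eL : forall p q : U, p * (e * q) = e * (p * q).
  by move=> p q; rewrite mulrA -eC mulrA.
have eR : forall p q : U, (e * p) * q = e * (p * q) by move=> p q; rewrite mulrA.
have key : forall x y z : U, (e * e - 1) * (y*(x*z - z*x) - (x*z - z*x)*y) = 0.
  move=> x y z.
  have [a hx] := fsurj x; have [b hy] := fsurj y; have [c0 hz] := fsurj z.
  have E1 : f ((a*b+b*a)*c0 + c0*(a*b+b*a) - (a*(b*c0+c0*b) + (b*c0+c0*b)*a)) =
     e * e * ((x*y+y*x)*z + z*(x*y+y*x) - (x*(y*z+z*y) + (y*z+z*y)*x)).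
    by rewrite fB !Jf hx hy hz [in LHS](eL z) [in LHS](eL x) [in LHS]eR [in LHS]eR -!mulrDr -!mulrBr mulrA.
  have E2 : f (b*(a*c0 - c0*a) - (a*c0 - c0*a)*b) = y*(x*z - z*x) - (x*z - z*x)*y.
    by rewrite !L1 hx hy hz.
  rewrite jid jid in E1; rewrite E1 in E2.
  by rewrite mulrBl mul1r E2 subrr.
have ee : e * e - 1 = 0.
  apply: (comm_lemma hprime hnc) => [y|x y z]; last exact: key.
  rewrite mulrBl mulrBr mul1r mulr1 -(mulrA e e y) (eC y) mulrA (eC y) -mulrA.
  by [].
have fdouble : forall a b, f (a*b) + f (a*b) =
    e * (f a * f b + f b * f a) + (f a * f b - f b * f a).
  move=> a b; rewrite -fD (_ : a*b + a*b = (a*b+b*a) + (a*b - b*a)); last first.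
    by rewrite addrA (addrAC (a*b)) addrK.
  by rewrite fD Jf L1.
have [e1|e1] : e = 1 \/ e = -1.
  have e1C : forall y, (e + 1) * y = y * (e + 1).
    by move=> y; rewrite mulrDl mulrDr mul1r mulr1 eC.
  have h : forall x, (e - 1) * x * (e + 1) = 0.
    move=> x; rewrite -mulrA -e1C mulrA.
    rewrite (_ : (e - 1) * (e + 1) = e * e - 1) ?ee ?mul0r //.
    by rewrite mulrBl !mulrDr !mulr1 mul1r opprD addrA addrK.
  case: (hprime _ _ h) => h'; [left | right]; apply/eqP.
    by rewrite -subr_eq0 h'.
  by rewrite -addr_eq0 h'.
- left=> a b.
  have fm : f (a*b) = f a * f b.
    apply: (half_eq hchar); rewrite fdouble e1 mul1r.
    by rewrite addrA (addrAC (f a * f b)) addrK.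
  split=> //; rewrite ?gdf fm.
  + by rewrite mulrA (dC (f a)) -mulrA.
  + by rewrite mulrA.
  + by rewrite dd e1 mul1r.
- right=> a b.
  have fm : f (a*b) = - (f b * f a).
    apply: (half_eq hchar); rewrite fdouble e1 mulN1r opprD.
    by rewrite addrA (addrAC (- (f a * f b))) addNr add0r.
  split=> //; rewrite ?gdf fm.
  + by rewrite mulrN mulrA.
  + by rewrite mulrN (mulrA d) (dC (f b)) -mulrA.
  + by rewrite dd e1 mulN1r.
Qed.

Lemma mulpE (F : fieldType) (U : algType F) (p q r s : U) :
  ((p, q) : superA U) * (r, s) = (p * r, q * s). Proof. by []. Qed.
Lemma addpE (F : fieldType) (U : algType F) (p q r s : U) :
  ((p, q) : superA U) + (r, s) = (p + r, q + s). Proof. by []. Qed.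
Lemma opppE (F : fieldType) (U : algType F) (p q : U) :
  - ((p, q) : superA U) = (- p, - q). Proof. by []. Qed.
Lemma scalepE (F : fieldType) (U : algType F) (k : F) (p q : U) :
  k *: ((p, q) : superA U) = (k *: p, k *: q). Proof. by []. Qed.

Lemma homogE (F : fieldType) (U : algType F) (x : superA U) :
  homog false x -> x = (x.1, x.1).
Proof. by case: x => p q /= ->. Qed.
Lemma homogO (F : fieldType) (U : algType F) (x : superA U) :
  homog true x -> x = (x.1, - x.1).
Proof. by case: x => p q /= ->. Qed.

Lemma decomp (F : fieldType) (U : algType F) (hchar : (2%:R : F) != 0) (x : superA U) :
  exists a b : U, x = ((a, a) : superA U) + (b, - b).
Proof.
set h := (2%:R : F)^-1.
have hh : forall u : U, h *: (u + u) = u.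
  by move=> u; rewrite -mulr2n -scaler_nat scalerA mulVf // scale1r.
exists (h *: (x.1 + x.2)), (h *: (x.1 - x.2)).
case: x => p q /=; rewrite addpE -scalerN -!scalerDr.
congr pair.
  by rewrite addrA (addrAC p) addrK hh.
by rewrite opprB addrA -(addrA p) addrC addKr hh.
Qed.

Unset Implicit Arguments.

Theorem theorem5p1 (F : fieldType) (U : algType F)
    (hchar : (2%:R : F) != 0)
    (hprime : prime_ring U) (hnc : noncommutative U)
    (phi : superA U -> superA U) :
  lie_superautomorphism phi ->
  superautomorphism phi \/ superantiautomorphism (fun x => - phi x).
Proof.
move=> [] [psi psiK phiK] [lin homP] hlie.
have phiD : forall x y, phi (x + y) = phi x + phi y.
  by move=> x y; rewrite -[x]scale1r lin !scale1r.
have phi0 : phi 0 = 0 by apply: (@addrI _ (phi 0)); rewrite -phiD !addr0.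
pose f := fun a : U => (phi (a, a)).1.
pose g := fun a : U => (phi (a, - a)).1.
have phE : forall a, phi (a, a) = (f a, f a).
  move=> a; rewrite /f; move: (homP false (a, a) (erefl _)); rewrite /homog /=.
  by case: (phi (a, a)) => p q /= ->.
have phO : forall a, phi (a, - a) = (g a, - g a).
  move=> a; rewrite /g; move: (homP true (a, - a) (erefl _)); rewrite /homog /=.
  by case: (phi (a, - a)) => p q /= ->.
have phE' : forall p q, q = p -> phi (p, q) = (f p, f p) by move=> p q ->.
have phO' : forall p q, q = - p -> phi (p, q) = (g p, - g p) by move=> p q ->.
have fD : forall x y, f (x + y) = f x + f y.
  by move=> x y; rewrite /f -addpE phiD.
have gD : forall x y, g (x + y) = g x + g y.
  by move=> x y; rewrite /g opprD -addpE phiD.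
have fsurj : forall y, exists x, f x = y.
  move=> y; have [a [b hx]] := decomp hchar (psi (y, y)).
  have := phiK (y, y); rewrite hx phiD phE phO addpE => -[h1 h2].
  exists a; have gb0 : g b = 0.
    apply: (two_cancel hchar); apply: (@addrI _ (f a)).
    by rewrite addrA h1 -h2 subrK addr0.
  by rewrite gb0 addr0 in h1.
have L1 : forall a b, f (a*b - b*a) = f a * f b - f b * f a.
  move=> a b; have := hlie false false (a, a) (b, b) (erefl _) (erefl _).
  rewrite /scomm /ssign /= !scale1r => h; rewrite !phE in h.
  by move: (congr1 fst h) => /= ->.
have L2 : forall a b, g (a*b - b*a) = f a * g b - g b * f a.
  move=> a b; have := hlie false true (a, a) (b, - b) (erefl _) (erefl _).
  rewrite /scomm /ssign /= !scale1r => h; rewrite phE phO in h.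
  rewrite phO' in h; last by rewrite /= mulrN mulNr opprK opprB addrC.
  by move: (congr1 fst h) => /= ->.
have L3 : forall a b, f (a*b + b*a) = g a * g b + g b * g a.
  move=> a b; have := hlie true true (a, - a) (b, - b) (erefl _) (erefl _).
  rewrite /scomm /ssign /= !scaleN1r !opprK => h; rewrite !phO in h.
  rewrite phE' in h; last by rewrite /= !mulrNN.
  by move: (congr1 fst h) => /= ->.
have [H|H] := core hchar hprime hnc fD gD fsurj L1 L2 L3.
- left; split; first exact: (Bijective psiK phiK); first by split.
  have mEE : forall a b, phi ((a, a) * (b, b)) = phi (a, a) * phi (b, b).
    move=> a b; rewrite mulpE !phE mulpE; case: (H a b) => h1 h2 h3 h4.
    by rewrite h1.
  have mEO : forall a b, phi ((a, a) * (b, - b)) = phi (a, a) * phi (b, - b).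
    move=> a b; rewrite mulpE phE !phO mulpE mulrN phO; case: (H a b) => h1 h2 h3 h4.
    by rewrite h2 mulrN.
  have mOE : forall a b, phi ((a, - a) * (b, b)) = phi (a, - a) * phi (b, b).
    move=> a b; rewrite mulpE phE !phO mulpE mulNr phO; case: (H a b) => h1 h2 h3 h4.
    by rewrite h3 mulNr.
  have mOO : forall a b, phi ((a, - a) * (b, - b)) = phi (a, - a) * phi (b, - b).
    move=> a b; rewrite mulpE !phO mulpE mulrNN phE; case: (H a b) => h1 h2 h3 h4.
    by rewrite h4 mulrNN.
  move=> x y; have [a [b ->]] := decomp hchar x; have [a' [b' ->]] := decomp hchar y.
  by rewrite !mulrDl !mulrDr !phiD !mulrDl !mulrDr mEE mEO mOE mOO.
- right; split.
  + exists (fun y => psi (- y)) => x /=; first by rewrite opprK psiK.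
    by rewrite phiK opprK.
  + split; first by move=> k x y; rewrite lin opprD scalerN.
    by move=> i x /(homP i); case: i; case: (phi x) => p q /= ->.
  + move=> i j x y; case: i => hx; case: j => hy.
    * rewrite (homogO hx) (homogO hy); move: (x.1) (y.1) => p q.
      rewrite /ssign /= scaleN1r mulrNN mulpE mulrNN phE phO phO mulpE mulrNN.
      by case: (H p q) => _ _ _ h4; rewrite h4.
    * rewrite (homogO hx) (homogE hy); move: (x.1) (y.1) => p q.
      rewrite /ssign /= scale1r mulrNN mulpE mulNr phO phE phO mulpE mulrN.
      by case: (H p q) => _ _ h3 _; rewrite h3 opppE !opprK.
    * rewrite (homogE hx) (homogO hy); move: (x.1) (y.1) => p q.
      rewrite /ssign /= scale1r mulrNN mulpE mulrN phO phO phE mulpE mulNr.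
      by case: (H p q) => _ h2 _ _; rewrite h2 opppE !opprK.
    * rewrite (homogE hx) (homogE hy); move: (x.1) (y.1) => p q.
      rewrite /ssign /= scale1r mulrNN mulpE !phE mulpE.
      by case: (H p q) => h1 _ _ _; rewrite h1 opppE opprK.
Qed.
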